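(* None of the posets encoded by $111011$, $111001$, $101011$, $110001$, and $110011$ has a 4-crown stack as a retract.
   Context: All posets are finite; level sets $P(0)=\min P$, $P(k+1)=\min(P\setminus\bigcup_{i\le k}P(i))$; $A<B$ means $a<b$ for all $a\in A,b\in B$. A retract is the image of an idempotent order-preserving self-map. A 4-crown stack is an ordinal sum of at least two 2-element antichains. A 6-crown is $x_0<y_0>x_1<y_1>x_2<y_2>x_0$ with no other comparabilities; type $3C$ means three disjoint 2-element chains with no further comparabilities. Encoding: for a binary string $b_0b_1\cdots b_{n-1}$, the encoded poset is the (unique up to isomorphism) poset $Q$ of height $n$ whose level sets $Q(0),\dots,Q(n)$ are 3-element antichains, with $Q(k)<Q(\ell)$ whenever $\ell\ge k+2$, and with $Q(k)\cup Q(k+1)$ a 6-crown if $b_k=1$ and of type $3C$ if $b_k=0$; all comparabilities follow from these. When $b_0=b_{n-1}=1$ (as for all posets here) this is exactly a nice section of width three of height $n$ with horizon 2. *)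

(* Defs.v *)
From mathcomp Require Import all_boot.
Set Implicit Arguments.
Unset Strict Implicit.
Unset Printing Implicit Defensive.

(* Elements of the poset encoded by a binary string b of length n:
   pairs (k, i) with k : 'I_(n+1) the level and i : 'I_3 the position in the
   level.  Level k is the 3-element antichain Q(k). *)
Definition enc_elt (b : seq bool) := ('I_(size b).+1 * 'I_3)%type.

(* Comparabilities between consecutive levels Q(k) (lower, index i) and
   Q(k+1) (upper, index j):
   - b_k = 1: 6-crown x_0<y_0>x_1<y_1>x_2<y_2>x_0, i.e. y_j is above x_j and
     x_(j+1 mod 3);
   - b_k = 0: type 3C, i.e. x_j < y_j only. *)
Definition adj_le (bk : bool) (i j : 'I_3) : bool :=
  if bk then (i == j :> nat) || (i == (j.+1 %% 3) :> nat)
  else (i == j :> nat).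

Definition enc_le (b : seq bool) : rel (enc_elt b) :=
  fun p q =>
    (p == q)
    || (p.1.+2 <= q.1)
    || ((q.1 == p.1.+1 :> nat) && adj_le (nth false b p.1) p.2 q.2).

(* Order of the 4-crown stack with m levels: ordinal sum of m 2-element
   antichains, elements (a, x) with a : 'I_m the level, x : bool. *)
Definition stack_le (m : nat) : rel ('I_m * bool) :=
  fun p q => (p == q) || (p.1 < q.1).

Definition is_retraction (T : Type) (le : rel T) (r : T -> T) : Prop :=
  (forall x y, le x y -> le (r x) (r y)) /\ (forall x, r (r x) = r x).

Definition has_4crown_stack_retract (T : Type) (le : rel T) : Prop :=
  exists r : T -> T, is_retraction le r /\
    exists m : nat, 2 <= m /\
      exists f : 'I_m * bool -> T,
        [/\ injective f,
            (forall p, exists x, f p = r x),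
            (forall x, exists p, r x = f p) &
            (forall p q, le (f p) (f q) = stack_le p q)].

(* Main.v *)
Require Import Defs.
From mathcomp Require Import all_boot.
From mathcomp Require Import zify.
Set Implicit Arguments. Unset Strict Implicit. Unset Printing Implicit Defensive.

Section Gen.
Variables (T : finType) (x0 : T) (idx : T -> nat) (e : seq T).
Hypothesis Hidx : forall x, idx x < size e.
Hypothesis He : forall x, nth x0 e (idx x) = x.

Lemma idx_inj : injective idx.
Proof. by move=> x y H; rewrite -(He x) -(He y) H. Qed.

Lemma mem_e x : x \in e.
Proof. by rewrite -(He x) mem_nth. Qed.

Section Le.
Variable le : rel T.

Definition dom0 (S : seq T) (x : T) : seq T :=
  [seq s <- S | all (fun t => (le t x ==> le t s) && (le x t ==> le s t)) S].
Definition D0 S := [seq dom0 S x | x <- e].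
Definition getD (D : seq (seq T)) x := nth [::] D (idx x).
Definition upd (D : seq (seq T)) (xy : T * T) :=
  let x := xy.1 in let y := xy.2 in
  if le x y then
    let gy := getD D y in
    let dx := [seq a <- getD D x | has (le a) gy] in
    let dy := [seq c <- gy | has (fun a => le a c) dx] in
    set_nth [::] (set_nth [::] D (idx x) dx) (idx y) dy
  else D.
Definition sweep ps D := foldl upd D ps.
Definition dead D := has (fun x => nilp (getD D x)) e.
Fixpoint loop ps k D := if dead D then true else (if k is k'.+1 then loop ps k' (sweep ps D) else false).
Definition Sseq (LS : seq (T * T)) := flatten [seq [:: p.1; p.2] | p <- LS].
Definition killed ps LS := loop ps 6 (D0 (Sseq LS)).
Definition incmp u v := ~~ le u v && ~~ le v u.
Definition cands := [seq p <- [seq (u, v) | u <- e, v <- e] |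
                       (idx p.1 < idx p.2) && incmp p.1 p.2].
Definition slt a b := (idx a != idx b) && le a b.
Definition above (t p : T * T) :=
  [&& slt t.1 p.1, slt t.1 p.2, slt t.2 p.1 & slt t.2 p.2].
Fixpoint chk ps cs n L top : bool :=
  if (if L is _ :: _ then killed ps (top :: L) else true) then
  (if n is n'.+1 then
     all (fun p => if above top p then chk ps cs n' (top :: L) p else true) cs
   else true) else false.
Lemma chk_kill ps cs n L top : chk ps cs n L top ->
  (if L is _ :: _ then killed ps (top :: L) else true).
Proof. by case: n => [|n] /= /andP []. Qed.

Definition pairsl := [seq p <- [seq (x, y) | x <- e, y <- e] |
  slt p.1 p.2 && ~~ has (fun z => slt p.1 z && slt z p.2) e].
Definition allchk_core :=
  let ps := pairsl in let cs := cands in all (fun p => chk ps cs 10 [::] p) cs.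

Section Sound.
Variable r : T -> T.
Hypothesis Hr : forall x y, le x y -> le (r x) (r y).
Variable S : seq T.
Hypothesis HS1 : forall x, r x \in S.
Hypothesis HS2 : forall t, t \in S -> r t = t.

Definition Inv D := forall x, r x \in getD D x.

Lemma getD_set D y v z :
  getD (set_nth [::] D (idx y) v) z = if z == y then v else getD D z.
Proof.
rewrite /getD nth_set_nth /=.
case: eqP => [/idx_inj ->|ne]; first by rewrite eqxx.
by case: eqP => // E; case: ne; rewrite E.
Qed.

Lemma inv_upd D xy : Inv D -> Inv (upd D xy).
Proof.
case: xy => x y HD; rewrite /upd /=; case: ifP => // lxy z.
rewrite !getD_set.
have rx : r x \in [seq a <- getD D x | has (le a) (getD D y)].
  by rewrite mem_filter HD andbT; apply/hasP; exists (r y) => //; apply: Hr.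
case: eqP => [->|_].
  by rewrite mem_filter HD andbT; apply/hasP; exists (r x) => //; apply: Hr.
by case: eqP => [->|_].
Qed.

Lemma inv_sweep ps D : Inv D -> Inv (sweep ps D).
Proof. by elim: ps D => //= p ps IH D HD; apply: IH; apply: inv_upd. Qed.

Lemma inv_dead D : Inv D -> dead D = false.
Proof.
move=> HD; apply/hasP => [[x _ /nilP E]].
by have := HD x; rewrite E.
Qed.

Lemma inv_loop ps k D : Inv D -> loop ps k D = false.
Proof.
elim: k D => [|k IH] D HD /=; first by rewrite inv_dead.
by rewrite inv_dead //= IH //; apply: inv_sweep.
Qed.

Lemma inv0 : Inv (D0 S).
Proof.
move=> x; rewrite /getD /D0 (nth_map x0) // He mem_filter HS1 andbT.
apply/allP => t tS; apply/andP; split; apply/implyP => H; have := Hr H;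
  by rewrite (HS2 tS).
Qed.
End Sound.

Lemma killed_false r ps LS :
  (forall x y, le x y -> le (r x) (r y)) ->
  (forall x, r x \in Sseq LS) -> (forall t, t \in Sseq LS -> r t = t) ->
  killed ps LS = false.
Proof. by move=> Hr H1 H2; apply: (inv_loop Hr); apply: inv0. Qed.

Definition pairof (g : bool -> T) :=
  if idx (g false) < idx (g true) then (g false, g true) else (g true, g false).

Lemma pairof_mem g t :
  (t \in [:: (pairof g).1; (pairof g).2]) = (t == g false) || (t == g true).
Proof. by rewrite /pairof; case: ifP => _; rewrite !inE // orbC. Qed.

Lemma pairof_cand g :
  ~~ le (g false) (g true) -> ~~ le (g true) (g false) -> g false != g true ->
  pairof g \in cands.
Proof.
move=> H1 H2 H3.
have Hi : idx (g false) != idx (g true).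
  by apply: contra H3 => /eqP /idx_inj ->.
rewrite /pairof; case: ifP => Hlt; rewrite mem_filter /= /incmp.
  rewrite Hlt H1 H2 /=; apply: allpairs_f; apply: mem_e.
rewrite H1 H2 andbT.
have -> : idx (g true) < idx (g false).
  by move: Hi Hlt; rewrite neq_ltn => /orP [->|->].
by apply: allpairs_f; apply: mem_e.
Qed.

Lemma pairof_above g h :
  (forall x y, slt (g x) (h y)) -> above (pairof g) (pairof h).
Proof.
by move=> H; rewrite /pairof; case: ifP => _; case: ifP => _; rewrite /above /= !H.
Qed.

Theorem gen_main : allchk_core -> #|T| <= 21 -> ~ has_4crown_stack_retract le.
Proof.
move=> Hchk Hcard [r [[Hr Hid] [m [Hm [f [finj Hfr Hrf Hfle]]]]]].
case: m Hm f finj Hfr Hrf Hfle => [|m'] // Hm f finj Hfr Hrf Hfle.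
have Hm9 : m' <= 9.
  have := @leq_card _ _ f finj; rewrite card_prod card_ord card_bool => H.
  have := leq_trans H Hcard; lia.
pose g a x := f (inord a, x).
pose lvl a := pairof (g a).
have iK : forall a, a <= m' -> ((inord a : 'I_m'.+1) : nat) = a.
  by move=> a Ha; rewrite inordK.
have Hslt : forall a x y, a < m' -> slt (g a x) (g a.+1 y).
  move=> a x y Ha; rewrite /slt /g Hfle /stack_le /= (iK a (ltnW Ha)) (iK a.+1 Ha).
  rewrite leqnn orbT andbT; apply/eqP => /idx_inj H; case: (finj _ _ H) => E _.
  by have := congr1 val E; rewrite /= (iK a (ltnW Ha)) (iK a.+1 Ha) => /n_Sn.
have Hcand : forall a, a <= m' -> lvl a \in cands.
  move=> a Ha; apply: pairof_cand; rewrite /g ?Hfle /stack_le /= ?ltnn ?orbF //.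
  1,2: by apply/eqP; case.
  by apply/eqP => H; case: (finj _ _ H).
have iS : forall k, rev (iota 0 k.+1) = k :: rev (iota 0 k).
  by move=> k; rewrite -addn1 iotaD rev_cat.
have Desc : forall k, k <= m' ->
    chk pairsl cands (10 - k) (map lvl (rev (iota 0 k))) (lvl k).
  elim => [_|k IH Hk].
    by move: Hchk => /allP; apply; apply: Hcand.
  have := IH (ltnW Hk).
  have -> : 10 - k = (10 - k.+1).+1 by lia.
  move=> /= /andP [_ /allP H].
  have := H _ (Hcand k.+1 Hk).
  move/implyP; rewrite pairof_above; last by move=> x y; apply: Hslt.
  by move=> /(_ isT); rewrite iS.
have H := chk_kill (Desc m' (leqnn _)).
have ELS : map lvl (rev (iota 0 m'.+1)) = lvl m' :: map lvl (rev (iota 0 m')).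
  by rewrite iS.
move: H; case EL: (map lvl (rev (iota 0 m'))) => [|z zs].
  by have := congr1 size EL; rewrite size_map size_rev size_iota => Em; move: Hm; rewrite Em.
rewrite -EL -ELS.
have HS : forall t, t \in Sseq (map lvl (rev (iota 0 m'.+1))) ->
    exists p, t = f p.
  move=> t /flatten_mapP [p /mapP [a _ ->]]; rewrite pairof_mem.
  by case/orP => /eqP ->; eexists.
rewrite (@killed_false r) //.
- move=> x; have [[a x'] ->] := Hrf x; apply/flatten_mapP.
  exists (lvl a); first by apply: map_f; rewrite mem_rev mem_iota /=.
  by rewrite pairof_mem /g inord_val; case: x'; rewrite eqxx ?orbT.
- move=> t /HS [p ->]; have [y ->] := Hfr p; exact: Hid.
Qed.
End Le.

Definition tle (tbl : seq (seq bool)) (p q : T) := nth false (nth [::] tbl (idx p)) (idx q).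
Definition mktbl (le : rel T) := [seq [seq le x y | y <- e] | x <- e].

Lemma tleE le p q : tle (mktbl le) p q = le p q.
Proof. by rewrite /tle /mktbl (nth_map x0) // (nth_map x0) // !He. Qed.

Theorem gen_main2 le : allchk_core (tle (mktbl le)) -> #|T| <= 21 ->
  ~ has_4crown_stack_retract le.
Proof.
move=> H1 H2 [r [[Hr Hid] [m [Hm [f [finj Hfr Hrf Hfle]]]]]].
apply: (gen_main H1 H2); exists r; split; first split => //.
  by move=> x y; rewrite !tleE; apply: Hr.
by exists m; split => //; exists f; split => // p q; rewrite tleE.
Qed.
End Gen.

Definition toE (k : nat) : 'I_7 * 'I_3 :=
  (Ordinal (ltn_pmod (k %/ 3) (ltn0Sn 6)), Ordinal (ltn_pmod k (ltn0Sn 2))).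
Definition E7 := mkseq toE 21.
Definition idx7 (p : 'I_7 * 'I_3) : nat := p.1 * 3 + p.2.
Definition x07 : 'I_7 * 'I_3 := toE 0.

Lemma Hidx7 x : idx7 x < size E7.
Proof.
case: x => [[i Hi] [j Hj]]; rewrite size_mkseq /idx7 /=.
apply: (@leq_trans (i * 3 + 3)); first by rewrite ltn_add2l.
by rewrite -mulSnr (@leq_mul2r 3 i.+1 7) Hi orbT.
Qed.

Lemma He7 x : nth x07 E7 (idx7 x) = x.
Proof.
rewrite nth_mkseq; last by have := Hidx7 x; rewrite size_mkseq.
case: x => [[i Hi] [j Hj]]; rewrite /toE /idx7 /=.
congr pair; apply: val_inj => /=.
  by rewrite divnMDl // divn_small // addn0 modn_small.
by rewrite modnMDl modn_small.
Qed.

Lemma spec_main (le : rel ('I_7 * 'I_3)) :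
  allchk_core idx7 E7 (tle idx7 (mktbl E7 le)) -> ~ has_4crown_stack_retract le.
Proof.
move=> H.
have Hc : #|{: 'I_7 * 'I_3}| <= 21 by rewrite card_prod !card_ord.
exact: (@gen_main2 _ x07 idx7 E7 Hidx7 He7 le H Hc).
Qed.

Theorem lemma7p3 :
  forall b : seq bool,
    b \in [:: [:: true; true; true; false; true; true];
              [:: true; true; true; false; false; true];
              [:: true; false; true; false; true; true];
              [:: true; true; false; false; false; true];
              [:: true; true; false; false; true; true]] ->
    ~ has_4crown_stack_retract (@enc_le b).
Proof.
move=> b; rewrite !inE => /orP [/eqP ->|/orP [/eqP ->|/orP [/eqP ->|/orP [/eqP ->|/eqP ->]]]];
  apply: spec_main; vm_cast_no_check (erefl true).
Qed.
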